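(* Let $p$ be a prime, $e\ge1$, and $G$ a finite abelian group of order $p^e$. Let $\psi^p\colon\mathbf{Z}[G]\to\mathbf{Z}[G]$ be the ring homomorphism with $\psi^p(g)=g^p$ for $g\in G$. If $\rho$ is a representation of level $k>0$ and there is no representation $\tau$ with $\psi\tau=\rho$, then $\psi^p(b_\rho)=0$.
   Context: A representation is a group homomorphism $\rho\colon G\to\mathbf{C}^*$; its level is $k$ if $\rho(G)$ has $p^k$ elements. For a representation $\tau$, $\psi\tau$ is the representation $x\mapsto\tau(x^p)$. Write $\omega=\exp(2\pi i/p)$. For $\rho$ of level $k>0$ set $b_\rho=\sum_{x\in G,\ \rho(x)=1}x-\sum_{\xi\in G,\ \rho(\xi)=\omega}\xi\in\mathbf{Z}[G]$. *)

(* Defs.v *)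
From mathcomp Require Import all_boot all_order all_algebra all_fingroup all_field.
Set Implicit Arguments. Unset Strict Implicit. Unset Printing Implicit Defensive.
Import GRing.Theory Num.Theory.
Local Open Scope ring_scope.

Definition is_rep (gT : finGroupType) (G : {group gT}) (rho : gT -> algC) :=
  {in G &, forall x y, rho (x * y)%g = rho x * rho y} /\ {in G, forall x, rho x != 0}.

Definition rep_level (gT : finGroupType) (G : {group gT}) (rho : gT -> algC)
  (p k : nat) : Prop :=
  size (undup [seq rho x | x in G]) = (p ^ k)%N.

Definition psi_rep (gT : finGroupType) (p : nat) (tau : gT -> algC) : gT -> algC :=
  fun x => tau (x ^+ p)%g.

(* omega = exp(2 pi i / p): p.-root (-1) is exp(i pi / p) (minimal nonnegative argument) *)
Definition omega (p : nat) : algC := (p.-root (-1)) ^+ 2.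

(* Z[G]: elements are integer coefficient functions supported on G *)
Definition grpring (gT : finGroupType) := {ffun gT -> int}.

(* psi^p on Z[G]: the additive (indeed ring) map with g |-> g^p *)
Definition psiP (gT : finGroupType) (G : {group gT}) (p : nat) (f : grpring gT)
  : grpring gT :=
  [ffun h => \sum_(g in G | (g ^+ p)%g == h) f g].

Definition b_rho (gT : finGroupType) (G : {group gT}) (p : nat) (rho : gT -> algC)
  : grpring gT :=
  [ffun x => ((x \in G) && (rho x == 1))%:R - ((x \in G) && (rho x == omega p))%:R].

(* Main.v *)
Require Import Defs.
From mathcomp Require Import all_boot all_order all_algebra all_fingroup all_field.
From mathcomp Require Import all_solvable all_character.
Set Implicit Arguments. Unset Strict Implicit. Unset Printing Implicit Defensive.
Import GRing.Theory Num.Theory.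
Local Open Scope ring_scope.

Lemma omega_p p : (0 < p)%N -> omega p ^+ p = 1.
Proof.
move=> p0; rewrite /omega -exprM mulnC exprM rootCK //.
by rewrite expr2 mulrNN mulr1.
Qed.

Lemma rep1 (gT : finGroupType) (G : {group gT}) (rho : gT -> algC) :
  is_rep G rho -> rho 1%g = 1.
Proof.
case=> hM hN; have := hM 1%g 1%g (group1 G) (group1 G).
rewrite mulg1 => h; have nz := hN 1%g (group1 G).
by apply: (mulfI nz); rewrite -h mulr1.
Qed.

Lemma repX (gT : finGroupType) (G : {group gT}) (rho : gT -> algC) n x :
  is_rep G rho -> x \in G -> rho (x ^+ n)%g = rho x ^+ n.
Proof.
move=> hr Gx; elim: n => [|n IH]; first by rewrite expg0 expr0 (rep1 hr).
by rewrite expgS exprS hr.1 ?groupX // IH.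
Qed.

Section CaseA.
Variables (gT : finGroupType) (G : {group gT}) (p : nat) (rho : gT -> algC).
Hypotheses (pr : prime p) (cGG : abelian G) (hr : is_rep G rho).
Variables (z : gT) (Gz : z \in G) (zp : (z ^+ p = 1)%g) (rz : rho z != 1).

Definition cnt (h : gT) (a : algC) :=
  (\sum_(g | (g \in G) && ((g ^+ p)%g == h) && (rho g == a)) 1)%N.

Lemma cnt_shift h a : cnt h (a * rho z) = cnt h a.
Proof.
rewrite /cnt (reindex_inj (mulIg z)); apply: eq_bigl => g /=.
have nz := hr.2 z Gz.
case Gg: (g \in G); last by rewrite groupMr // Gg.
rewrite groupMr // Gg /= expgMn; last exact: (centsP cGG) g Gg z Gz.
by rewrite zp mulg1 hr.1 // (inj_eq (mulIf nz)).
Qed.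

Lemma prim_rz : p.-primitive_root (rho z).
Proof.
have p0 := prime_gt0 pr.
have rzp : rho z ^+ p = 1 by rewrite -(repX _ hr) // zp (rep1 hr).
have [m pm mp] := prim_order_exists p0 rzp.
have /primeP[_ /(_ m mp) /= /orP[/eqP m1|/eqP m1]] := pr; last by rewrite -m1.
move: pm; rewrite m1 => /prim_expr_order; rewrite expr1 => h1.
by move: rz; rewrite h1 eqxx.
Qed.

Lemma cnt_pow h j : cnt h (rho z ^+ j) = cnt h 1.
Proof.
elim: j => [|j IH]; first by rewrite expr0.
by rewrite exprSr cnt_shift.
Qed.

Lemma caseA : psiP G p (b_rho G p rho) = 0.
Proof.
apply/ffunP => h; rewrite !ffunE.
have e a : (\sum_(g in G | (g ^+ p)%g == h) ((g \in G) && (rho g == a))%:R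
            = (cnt h a)%:R :> int).
  rewrite /cnt natr_sum big_mkcond [RHS]big_mkcond; apply: eq_bigr => g _.
  by case: (g \in G); case: (_ == h); case: (rho g == a).
rewrite (eq_bigr (fun g => ((g \in G) && (rho g == 1))%:R
                 - ((g \in G) && (rho g == omega p))%:R)); last first.
  by move=> g _; rewrite ffunE.
rewrite sumrB !e.
have [i ->] := prim_rootP prim_rz (omega_p (prime_gt0 pr)).
by rewrite cnt_pow subrr.
Qed.
End CaseA.

Section CaseB.
Variables (gT : finGroupType) (G : {group gT}) (p e : nat) (rho : gT -> algC).
Hypotheses (pr : prime p) (cGG : abelian G) (hr : is_rep G rho)
  (cardG : #|G| = (p ^ e)%N)
  (htriv : forall z, z \in G -> (z ^+ p = 1)%g -> rho z = 1).

Definition fr (y : gT) : algC :=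
  if [pick x in G | (x ^+ p)%g == y] is Some x then rho x else 1.

Lemma frE x : x \in G -> fr (x ^+ p)%g = rho x.
Proof.
move=> Gx; rewrite /fr; case: pickP => [x' /andP[Gx' /eqP ex]|]; last first.
  by move/(_ x); rewrite Gx eqxx.
have com : commute x' x^-1 by apply: (centsP cGG) x' Gx' _ (groupVr Gx).
have h1 : ((x' * x^-1) ^+ p = 1)%g by rewrite expgMn // expgVn ex mulgV.
have := htriv (groupM Gx' (groupVr Gx)) h1.
rewrite hr.1 ?groupVr // => h.
have nz := hr.2 x Gx.
have rV : rho x^-1 * rho x = 1 by rewrite -hr.1 ?groupVr // mulVg (rep1 hr).
by rewrite -[rho x']mulr1 -rV mulrA h mul1r.
Qed.

Definition H : {group gT} := Mho_group 1 G.

Lemma HE : H :=: [set (x ^+ p)%g | x in G].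
Proof.
rewrite /H /= (@MhoEabelian 1%N _ p) ?expn1 //.
by rewrite /pgroup cardG pnatX pnat_id.
Qed.

Lemma sHG : H \subset G. Proof. exact: Mho_sub. Qed.

Definition rf (y : gT) : 'M[algC]_1 := (fr y)%:M.

Lemma rf_repr : mx_repr H rf.
Proof.
split.
  by rewrite /rf -(expg1n _ p) frE // (rep1 hr).
move=> y1 y2; rewrite HE => /imsetP[x1 G1 ->] /imsetP[x2 G2 ->].
rewrite /rf -scalar_mxM -expgMn; last exact: (centsP cGG) x1 G1 x2 G2.
by rewrite !frE ?groupM // hr.1.
Qed.

Definition rH := MxRepresentation rf_repr.

Lemma phi_lin : cfRepr rH \is a linear_char.
Proof. by apply/andP; split; [exact: cfRepr_char | rewrite cfRepr1]. Qed.

Lemma caseB : exists tau : gT -> algC,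
  is_rep G tau /\ {in G, forall x, psi_rep p tau x = rho x}.
Proof.
have /irrP[j ej] := lin_char_irr phi_lin.
have [i ci] := constt_cfInd_irr j sHG.
rewrite constt_Ind_Res in ci.
have lini : 'chi[G]_i \is a linear_char by apply/char_abelianP.
have linR := cfRes_lin_char H lini.
have /irrP[j' ej'] := lin_char_irr linR.
rewrite ej' constt_irr inE in ci.
move/eqP: ci => ci; subst j'.
exists (fun x => 'chi[G]_i x); split.
  split; [exact: lin_charM | exact: lin_char_neq0].
move=> x Gx; rewrite /psi_rep.
have Hx : (x ^+ p)%g \in H by rewrite HE; apply/imsetP; exists x.
rewrite -(cfResE _ sHG Hx) ej' -ej cfunE Hx mulr1n /= mxtrace_scalar.
by rewrite /rf frE.
Qed.
End CaseB.

Theorem mainTheorem4 (gT : finGroupType) (G : {group gT}) (p e k : nat)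
  (rho : gT -> algC) :
  prime p -> (0 < e)%N -> abelian G -> #|G| = (p ^ e)%N ->
  is_rep G rho -> (0 < k)%N -> rep_level G rho p k ->
  ~ (exists tau : gT -> algC, is_rep G tau /\ {in G, forall x, psi_rep p tau x = rho x}) ->
  psiP G p (b_rho G p rho) = 0.
Proof.
move=> pr _ cGG cardG hr _ _ notau.
have [z /andP[Gz /andP[/eqP zp rz]]|none] :=
  pickP [pred z | (z \in G) && (((z ^+ p)%g == 1%g) && (rho z != 1))].
  exact: (caseA pr cGG hr Gz zp rz).
exfalso; apply: notau; apply: (caseB pr cGG hr cardG).
move=> z Gz zp; move: (none z) => /=; rewrite Gz zp eqxx /=.
by move/negbFE/eqP.
Qed.
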